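(* Let $\phi\in C^3((0,\infty))$, $\eta=\phi'$ and $\hat\eta(r)=\eta(r)+2\eta(2r)$, and suppose there are constants $0<a_0<\tilde r_1<\tilde r_2<2a_0$ and $a_1>a_0$ such that: $\eta'(r)>0$ for $0<r<\tilde r_1$ and $\eta'(r)<0$ for $r>\tilde r_1$; $\eta''(r)<0$ for $0<r<\tilde r_2$ and $\eta''(r)>0$ for $r>\tilde r_2$; $\hat\eta(r)<0$ for $0<r<a_0$ and $\hat\eta(r)>0$ for $r>a_0$; $\hat\eta'(r)>0$ for $0<r<a_1$ and $\hat\eta'(r)<0$ for $r>a_1$. Let $N,K$ be integers with $K\ge2$ and $K<N-1$. For $\mathbf r=(r_{-N},\dots,r_N)\in(0,\infty)^{2N+1}$ define $\hat{\mathbf\Psi}^E(\mathbf r)=(\hat\psi^E_{-N}(\mathbf r),\dots,\hat\psi^E_N(\mathbf r))$ by $\hat\psi^E_j=\eta(r_j)+2\eta(2r_j)$ for $-N\le j\le -K-2$ and for $K+2\le j\le N$; $\hat\psi^E_{-K-1}=\eta(r_j)+2\eta(2r_j)+\tfrac12\eta(r_j+r_{j+1})$ (with $j=-K-1$); $\hat\psi^E_{-K}=\eta(r_j)+\tfrac12\eta(r_j+r_{j-1})+\tfrac12\eta(r_j+r_{j+1})+\eta(2r_j)$ (with $j=-K$); $\hat\psi^E_{-K+1}=\eta(r_j)+\tfrac12\eta(r_j+r_{j-1})+\eta(r_j+r_{j+1})$ (with $j=-K+1$); $\hat\psi^E_j=\eta(r_j)+\eta(r_j+r_{j-1})+\eta(r_j+r_{j+1})$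 for $-K+2\le j\le K-2$; $\hat\psi^E_{K-1}=\eta(r_j)+\eta(r_j+r_{j-1})+\tfrac12\eta(r_j+r_{j+1})$ (with $j=K-1$); $\hat\psi^E_{K}=\eta(r_j)+\tfrac12\eta(r_j+r_{j-1})+\tfrac12\eta(r_j+r_{j+1})+\eta(2r_j)$ (with $j=K$); $\hat\psi^E_{K+1}=\eta(r_j)+2\eta(2r_j)+\tfrac12\eta(r_j+r_{j-1})$ (with $j=K+1$); and $\hat{\mathbf\Psi}^G(\mathbf r)=(\hat\psi^G_{-N}(\mathbf r),\dots,\hat\psi^G_N(\mathbf r))$ by $\hat\psi^G_j=0$ for $-N\le j\le -K-2$ and for $K+2\le j\le N$; $\hat\psi^G_{-K-1}=-\tfrac12\eta(r_{-K}+r_{-K-1})$; $\hat\psi^G_{-K}=\eta(2r_{-K})-\tfrac12\eta(r_{-K}+r_{-K+1})-\tfrac12\eta(r_{-K}+r_{-K-1})$; $\hat\psi^G_{-K+1}=2\eta(2r_{-K})-\tfrac12\eta(r_{-K}+r_{-K+1})-\eta(r_{-K}+r_{-K-1})$; $\hat\psi^G_j=2\eta(2r_K)-\eta(r_K+r_{K-1})-\eta(r_K+r_{K+1})$ for $-K+2\le j\le K-2$; $\hat\psi^G_{K-1}=2\eta(2r_K)-\tfrac12\eta(r_K+r_{K-1})-\eta(r_K+r_{K+1})$; $\hat\psi^G_{K}=\eta(2r_K)-\tfrac12\eta(r_K+r_{K-1})-\tfrac12\eta(r_K+r_{K+1})$; $\hat\psi^G_{K+1}=-\tfrac12\eta(r_K+r_{K+1})$.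 Suppose $r_L,r_U$ satisfy $\tilde r_2/2<r_L<r_U$ and $\eta'(r_U)+13\eta'(2r_L)>0$, and $\mathbf\Phi\in\mathbb R^{2N+1}$ satisfies $\eta(r_L)+4\eta(2r_L)-2\eta(2r_U)<\Phi_j<\eta(r_U)+4\eta(2r_U)-2\eta(2r_L)$ for $j=-N,\dots,N$. Then for every $\mathbf r^n\in\Omega=(r_L,r_U)^{2N+1}$ there is a unique $\mathbf r^{n+1}\in\Omega$ such that $\hat{\mathbf\Psi}^E(\mathbf r^{n+1})+\hat{\mathbf\Psi}^G(\mathbf r^n)=\mathbf\Phi$. Moreover, the induced mapping $\mathbf r^n\mapsto\mathbf r^{n+1}$ is a contraction: if $\mathbf s^n\in\Omega$ and $\mathbf s^{n+1}$ is its image, then $\|\mathbf r^{n+1}-\mathbf s^{n+1}\|_\infty\le\frac{8|\eta'(2r_L)|}{\eta'(r_U)-5|\eta'(2r_L)|}\|\mathbf r^n-\mathbf s^n\|_\infty$, where $\frac{8|\eta'(2r_L)|}{\eta'(r_U)-5|\eta'(2r_L)|}<1$.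
   Context: $\|\mathbf r\|_\infty=\max_{-N\le i\le N}|r_i|$. $\hat{\mathbf\Psi}^E$ is the internal conjugate force of the energy-based quasicontinuum approximation and $\hat{\mathbf\Psi}^G$ the (symmetrized) ghost-force correction, for a one-dimensional chain with nearest and next-nearest neighbour pair interactions given by $\phi$; the iteration is the ghost force iteration. *)

(* Defs.v *)
From Stdlib Require Import Reals Lra Lia ZArith List.
From Coquelicot Require Import Coquelicot.
Open Scope R_scope.

(* Vectors r = (r_{-N},...,r_N) are represented as functions Z -> R;
   only the indices -N <= j <= N are meaningful. *)

Definition C3_chain (phi eta eta1 eta2 eta3 : R -> R) : Prop :=
  (forall r, 0 < r -> is_derive phi r (eta r)) /\
  (forall r, 0 < r -> is_derive eta r (eta1 r)) /\
  (forall r, 0 < r -> is_derive eta1 r (eta2 r)) /\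
  (forall r, 0 < r -> is_derive eta2 r (eta3 r)) /\
  (forall r, 0 < r -> continuous eta3 r).

Definition eta_hat (eta : R -> R) (r : R) : R := eta r + 2 * eta (2 * r).

Definition psiE (eta : R -> R) (K : Z) (r : Z -> R) (j : Z) : R :=
  if (j <=? -K - 2)%Z then eta (r j) + 2 * eta (2 * r j)
  else if (j =? -K - 1)%Z then
    eta (r j) + 2 * eta (2 * r j) + / 2 * eta (r j + r (j + 1)%Z)
  else if (j =? -K)%Z then
    eta (r j) + / 2 * eta (r j + r (j - 1)%Z) + / 2 * eta (r j + r (j + 1)%Z)
      + eta (2 * r j)
  else if (j =? -K + 1)%Z then
    eta (r j) + / 2 * eta (r j + r (j - 1)%Z) + eta (r j + r (j + 1)%Z)
  else if (j <=? K - 2)%Z then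
    eta (r j) + eta (r j + r (j - 1)%Z) + eta (r j + r (j + 1)%Z)
  else if (j =? K - 1)%Z then
    eta (r j) + eta (r j + r (j - 1)%Z) + / 2 * eta (r j + r (j + 1)%Z)
  else if (j =? K)%Z then
    eta (r j) + / 2 * eta (r j + r (j - 1)%Z) + / 2 * eta (r j + r (j + 1)%Z)
      + eta (2 * r j)
  else if (j =? K + 1)%Z then
    eta (r j) + 2 * eta (2 * r j) + / 2 * eta (r j + r (j - 1)%Z)
  else eta (r j) + 2 * eta (2 * r j).

(* (symmetrized) ghost-force correction, transcribed literally *)
Definition psiG (eta : R -> R) (K : Z) (r : Z -> R) (j : Z) : R :=
  if (j <=? -K - 2)%Z then 0
  else if (j =? -K - 1)%Z then - / 2 * eta (r (-K)%Z + r (-K - 1)%Z)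
  else if (j =? -K)%Z then
    eta (2 * r (-K)%Z) - / 2 * eta (r (-K)%Z + r (-K + 1)%Z)
      - / 2 * eta (r (-K)%Z + r (-K - 1)%Z)
  else if (j =? -K + 1)%Z then
    2 * eta (2 * r (-K)%Z) - / 2 * eta (r (-K)%Z + r (-K + 1)%Z)
      - eta (r (-K)%Z + r (-K - 1)%Z)
  else if (j <=? K - 2)%Z then
    2 * eta (2 * r K) - eta (r K + r (K - 1)%Z) - eta (r K + r (K + 1)%Z)
  else if (j =? K - 1)%Z then
    2 * eta (2 * r K) - / 2 * eta (r K + r (K - 1)%Z) - eta (r K + r (K + 1)%Z)
  else if (j =? K)%Z then
    eta (2 * r K) - / 2 * eta (r K + r (K - 1)%Z) - / 2 * eta (r K + r (K + 1)%Z)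
  else if (j =? K + 1)%Z then - / 2 * eta (r K + r (K + 1)%Z)
  else 0.

Definition in_range (N j : Z) : Prop := (-N <= j <= N)%Z.

Definition in_Omega (N : Z) (rL rU : R) (r : Z -> R) : Prop :=
  forall j, in_range N j -> rL < r j < rU.

Definition gfi_step (eta : R -> R) (N K : Z) (Phi r r' : Z -> R) : Prop :=
  forall j, in_range N j -> psiE eta K r' j + psiG eta K r j = Phi j.

Definition supnorm (N : Z) (v : Z -> R) : R :=
  fold_right Rmax 0
    (map (fun k : nat => Rabs (v (Z.of_nat k - N)%Z)) (seq 0 (Z.to_nat (2 * N + 1)))).

(* Main.v *)
Require Import Defs.
From Stdlib Require Import Reals ZArith.
From Coquelicot Require Import Coquelicot.
Open Scope R_scope.
From Stdlib Require Import Lra Lia List.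
Lemma mvt_pos (f df : R -> R) u v :
  0 < Rmin u v -> (forall r, 0 < r -> is_derive f r (df r)) ->
  exists c, Rmin u v <= c <= Rmax u v /\ f v - f u = df c * (v - u).
Proof.
  intros Hp Hd. apply (MVT_gen f u v df).
  - intros x Hx. apply Hd. lra.
  - intros x Hx. apply continuity_pt_filterlim.
    apply (ex_derive_continuous f x). exists (df x). apply Hd. lra.
Qed.

Lemma d_dec (f df : R -> R) b u v :
  (forall r, 0 < r -> is_derive f r (df r)) ->
  (forall r, 0 < r < b -> df r < 0) -> 0 < u <= v -> v < b -> f v <= f u.
Proof.
  intros Hd Hs Hu Hv.
  destruct (mvt_pos f df u v) as [c [Hc He]]; auto.
  - rewrite Rmin_left; lra.
  - rewrite Rmin_left in Hc by lra. rewrite Rmax_right in Hc by lra.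
    assert (df c < 0) by (apply Hs; lra). nra.
Qed.

Lemma d_inc (f df : R -> R) b u v :
  (forall r, 0 < r -> is_derive f r (df r)) ->
  (forall r, r > b -> df r > 0) -> 0 < b -> b < u <= v -> f u <= f v.
Proof.
  intros Hd Hs Hb Hu.
  destruct (mvt_pos f df u v) as [c [Hc He]]; auto.
  - rewrite Rmin_left; lra.
  - rewrite Rmin_left in Hc by lra. rewrite Rmax_right in Hc by lra.
    assert (df c > 0) by (apply Hs; lra). nra.
Qed.
Open Scope R_scope.

Definition box (N : Z) (rL rU : R) (x : Z -> R) : Prop :=
  forall k, in_range N k -> rL <= x k <= rU.

Ltac zcases := repeat match goal with
 | |- context [ (?a <=? ?b)%Z ] => destruct (Z.leb_spec a b)
 | |- context [ (?a =? ?b)%Z ] => destruct (Z.eqb_spec a b)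
 end; cbv beta iota.

Ltac rg := unfold in_range in *; lia.

Section S.
Variable eta : R -> R.
Variables (N K : Z) (rL rU a m : R).
Hypothesis HK : (2 <= K)%Z.
Hypothesis HKN : (K < N - 1)%Z.
Hypothesis Ha : 0 <= a.
Hypothesis Lip : forall u v, 2 * rL <= u -> 2 * rL <= v -> Rabs (eta u - eta v) <= a * Rabs (u - v).

Lemma lip2 x y i k : box N rL rU x -> box N rL rU y ->
  (forall k, in_range N k -> Rabs (x k - y k) <= m) ->
  in_range N i -> in_range N k ->
  - (2 * (a * m)) <= eta (x i + x k) - eta (y i + y k) <= 2 * (a * m).
Proof.
  intros Bx By Hm Hi Hk. apply Rabs_le_between.
  pose proof (Bx i Hi); pose proof (Bx k Hk); pose proof (By i Hi); pose proof (By k Hk).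
  eapply Rle_trans. apply Lip; lra.
  replace (2 * (a * m)) with (a * (2 * m)) by ring.
  apply Rmult_le_compat_l; auto.
  replace (x i + x k - (y i + y k)) with ((x i - y i) + (x k - y k)) by ring.
  eapply Rle_trans. apply Rabs_triang. pose proof (Hm i Hi); pose proof (Hm k Hk). lra.
Qed.

Lemma lipd x y i : box N rL rU x -> box N rL rU y ->
  (forall k, in_range N k -> Rabs (x k - y k) <= m) ->
  in_range N i ->
  - (2 * (a * m)) <= eta (2 * x i) - eta (2 * y i) <= 2 * (a * m).
Proof.
  intros Bx By Hm Hi. apply Rabs_le_between.
  pose proof (Bx i Hi); pose proof (By i Hi).
  eapply Rle_trans. apply Lip; lra.
  replace (2 * (a * m)) with (a * (2 * m)) by ring.
  apply Rmult_le_compat_l; auto.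
  replace (2 * x i - 2 * y i) with (2 * (x i - y i)) by ring.
  rewrite Rabs_mult, Rabs_pos_eq by lra. pose proof (Hm i Hi). lra.
Qed.

Ltac lipfacts x y Bx By Hm :=
  repeat (match goal with
  | |- context [eta (x ?i + x ?k)] =>
      lazymatch goal with _ : - _ <= eta (x i + x k) - _ <= _ |- _ => fail | _ =>
      pose proof (lip2 x y i k Bx By Hm ltac:(rg) ltac:(rg)) end
  | |- context [eta (2 * x ?i)] =>
      lazymatch goal with _ : - _ <= eta (2 * x i) - _ <= _ |- _ => fail | _ =>
      pose proof (lipd x y i Bx By Hm ltac:(rg)) end
  end).

Lemma lipE x y j : box N rL rU x -> box N rL rU y ->
  (forall k, in_range N k -> Rabs (x k - y k) <= m) -> in_range N j ->
  Rabs (psiE eta K x j - psiE eta K y j - (eta (x j) - eta (y j))) <= 5 * (a * m).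
Proof.
  intros Bx By Hm Hj. assert (0 <= m) by (specialize (Hm j Hj); pose proof (Rabs_pos (x j - y j)); lra).
  assert (0 <= a * m) by (apply Rmult_le_pos; auto).
  apply Rabs_le_between. unfold psiE. zcases; lipfacts x y Bx By Hm; lra.
Qed.

Lemma lipG x y j : box N rL rU x -> box N rL rU y ->
  (forall k, in_range N k -> Rabs (x k - y k) <= m) -> in_range N j ->
  Rabs (psiG eta K x j - psiG eta K y j) <= 8 * (a * m).
Proof.
  intros Bx By Hm Hj. assert (0 <= m) by (specialize (Hm j Hj); pose proof (Rabs_pos (x j - y j)); lra).
  assert (0 <= a * m) by (apply Rmult_le_pos; auto).
  apply Rabs_le_between. unfold psiG. zcases; lipfacts x y Bx By Hm; lra.
Qed.
End S.

Section S2.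
Variable eta : R -> R.
Variables (N K : Z) (rL rU : R) (Phi : Z -> R).
Hypothesis HK : (2 <= K)%Z.
Hypothesis HKN : (K < N - 1)%Z.
Hypothesis HLU : rL < rU.
Hypothesis Mono : forall u v, 2 * rL <= u <= v -> eta v <= eta u.
Hypothesis HPhi : forall j, in_range N j ->
     eta rL + 4 * eta (2 * rL) - 2 * eta (2 * rU) < Phi j /\
     Phi j < eta rU + 4 * eta (2 * rU) - 2 * eta (2 * rL).

Lemma bnd2 x i k : box N rL rU x -> in_range N i -> in_range N k ->
  eta (2 * rU) <= eta (x i + x k) <= eta (2 * rL).
Proof.
  intros Bx Hi Hk. pose proof (Bx i Hi); pose proof (Bx k Hk).
  split; apply Mono; lra.
Qed.

Lemma bndd x i : box N rL rU x -> in_range N i ->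
  eta (2 * rU) <= eta (2 * x i) <= eta (2 * rL).
Proof.
  intros Bx Hi. pose proof (Bx i Hi). split; apply Mono; lra.
Qed.

Ltac bfacts x Bx :=
  repeat (match goal with
  | |- context [eta (x ?i + x ?k)] =>
      lazymatch goal with _ : _ <= eta (x i + x k) <= _ |- _ => fail | _ =>
      pose proof (bnd2 x i k Bx ltac:(rg) ltac:(rg)) end
  | |- context [eta (2 * x ?i)] =>
      lazymatch goal with _ : _ <= eta (2 * x i) <= _ |- _ => fail | _ =>
      pose proof (bndd x i Bx ltac:(rg)) end
  end).

Lemma bndLo x rn j : box N rL rU x -> box N rL rU rn -> in_range N j -> x j = rL ->
  psiE eta K x j + psiG eta K rn j < Phi j.
Proof.
  intros Bx Br Hj Hx. assert (E : eta (x j) = eta rL) by (rewrite Hx; auto).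
  assert (eta (2 * rU) <= eta (2 * rL)) by (apply Mono; lra).
  destruct (HPhi j Hj).
  unfold psiE, psiG. zcases; bfacts x Bx; bfacts rn Br; lra.
Qed.

Lemma bndHi x rn j : box N rL rU x -> box N rL rU rn -> in_range N j -> x j = rU ->
  psiE eta K x j + psiG eta K rn j > Phi j.
Proof.
  intros Bx Br Hj Hx. assert (E : eta (x j) = eta rU) by (rewrite Hx; auto).
  assert (eta (2 * rU) <= eta (2 * rL)) by (apply Mono; lra).
  destruct (HPhi j Hj).
  unfold psiE, psiG. zcases; bfacts x Bx; bfacts rn Br; lra.
Qed.
End S2.

Section S3.
Variable eta : R -> R.
Variables (N K : Z) (rL rU a lo hi : R) (Phi rn : Z -> R).
Hypothesis HK : (2 <= K)%Z.
Hypothesis HKN : (K < N - 1)%Z.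
Hypothesis HLU : rL < rU.
Hypothesis Ha : 0 <= a.
Hypothesis Hlo : 13 * a < lo.
Hypothesis Hhi : lo <= hi.
Hypothesis Lip : forall u v, 2 * rL <= u -> 2 * rL <= v -> Rabs (eta u - eta v) <= a * Rabs (u - v).
Hypothesis Mono : forall u v, 2 * rL <= u <= v -> eta v <= eta u.
Hypothesis H0 : forall u v, rL <= u <= rU -> rL <= v <= rU ->
  exists p, lo <= p <= hi /\ eta u - eta v = p * (u - v).
Hypothesis HPhi : forall j, in_range N j ->
     eta rL + 4 * eta (2 * rL) - 2 * eta (2 * rU) < Phi j /\
     Phi j < eta rU + 4 * eta (2 * rU) - 2 * eta (2 * rL).
Hypothesis Brn : box N rL rU rn.

Definition om := / (hi + 5 * a).
Definition Tm (x : Z -> R) (j : Z) := x j - om * (psiE eta K x j + psiG eta K rn j - Phi j).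

Lemma om_pos : 0 < om.
Proof. unfold om. apply Rinv_0_lt_compat. lra. Qed.

Lemma om_eq : om * (hi + 5 * a) = 1.
Proof. unfold om. field. lra. Qed.

Lemma T_box x j : box N rL rU x -> in_range N j -> rL < Tm x j < rU.
Proof.
  intros Bx Hj. pose proof om_pos as Hom. pose proof om_eq as Hoe.
  pose proof (Bx j Hj) as Hxj.
  set (yl := fun k => if Z.eq_dec k j then rL else x k).
  set (yu := fun k => if Z.eq_dec k j then rU else x k).
  assert (Byl : box N rL rU yl).
  { intros k Hk. unfold yl. destruct (Z.eq_dec k j); [lra | apply Bx; auto]. }
  assert (Byu : box N rL rU yu).
  { intros k Hk. unfold yu. destruct (Z.eq_dec k j); [lra | apply Bx; auto]. }
  assert (Eyl : yl j = rL) by (unfold yl; destruct (Z.eq_dec j j); congruence).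
  assert (Eyu : yu j = rU) by (unfold yu; destruct (Z.eq_dec j j); congruence).
  assert (Dl : forall k, in_range N k -> Rabs (x k - yl k) <= x j - rL).
  { intros k Hk. unfold yl. destruct (Z.eq_dec k j).
    - subst k. rewrite Rabs_pos_eq; lra.
    - rewrite Rminus_eq_0, Rabs_R0. lra. }
  assert (Du : forall k, in_range N k -> Rabs (x k - yu k) <= rU - x j).
  { intros k Hk. unfold yu. destruct (Z.eq_dec k j).
    - subst k. rewrite Rabs_minus_sym, Rabs_pos_eq; lra.
    - rewrite Rminus_eq_0, Rabs_R0. lra. }
  pose proof (lipE eta N K rL rU a (x j - rL) HK HKN Ha Lip x yl j Bx Byl Dl Hj) as L1.
  pose proof (lipE eta N K rL rU a (rU - x j) HK HKN Ha Lip x yu j Bx Byu Du Hj) as L2.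
  rewrite Eyl in L1. rewrite Eyu in L2.
  apply Rabs_le_between in L1. apply Rabs_le_between in L2.
  pose proof (bndLo eta N K rL rU Phi HK HKN HLU Mono HPhi yl rn j Byl Brn Hj Eyl) as B1.
  pose proof (bndHi eta N K rL rU Phi HK HKN HLU Mono HPhi yu rn j Byu Brn Hj Eyu) as B2.
  destruct (H0 (x j) rL) as [p1 [Hp1 E1]]; try lra.
  destruct (H0 (x j) rU) as [p2 [Hp2 E2]]; try lra.
  assert (Hp1' : om * (p1 + 5 * a) <= 1) by (rewrite <- Hoe; apply Rmult_le_compat_l; lra).
  assert (Hp2' : om * (p2 + 5 * a) <= 1) by (rewrite <- Hoe; apply Rmult_le_compat_l; lra).
  unfold Tm. split.
  - assert (F1 : om * (psiE eta K yl j + psiG eta K rn j - Phi j) < 0) by nra.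
    assert (F2 : om * (psiE eta K x j - psiE eta K yl j - (eta (x j) - eta rL)) <= om * (5 * (a * (x j - rL)))) by (apply Rmult_le_compat_l; lra).
    assert (F3 : 0 <= (x j - rL) * (1 - om * (p1 + 5 * a))) by (apply Rmult_le_pos; lra).
    nra.
  - assert (F1 : om * (psiE eta K yu j + psiG eta K rn j - Phi j) > 0) by (apply Rmult_gt_0_compat; lra).
    assert (F2 : om * (- (5 * (a * (rU - x j)))) <= om * (psiE eta K x j - psiE eta K yu j - (eta (x j) - eta rU))) by (apply Rmult_le_compat_l; lra).
    assert (F3 : 0 <= (rU - x j) * (1 - om * (p2 + 5 * a))) by (apply Rmult_le_pos; lra).
    nra.
Qed.

Lemma T_contr x y m j : box N rL rU x -> box N rL rU y ->
  (forall k, in_range N k -> Rabs (x k - y k) <= m) -> in_range N j ->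
  Rabs (Tm x j - Tm y j) <= (1 - om * (lo - 5 * a)) * m.
Proof.
  intros Bx By Hm Hj. pose proof om_pos as Hom. pose proof om_eq as Hoe.
  pose proof (lipE eta N K rL rU a m HK HKN Ha Lip x y j Bx By Hm Hj) as L1.
  apply Rabs_le_between in L1.
  pose proof (Hm j Hj) as Hd. apply Rabs_le_between in Hd.
  destruct (H0 (x j) (y j)) as [p [Hp E1]]; try (apply Bx || apply By; auto).
  assert (Hp' : om * (p + 5 * a) <= 1) by (rewrite <- Hoe; apply Rmult_le_compat_l; lra).
  assert (Hm0 : 0 <= m) by lra.
  unfold Tm. apply Rabs_le_between.
  assert (F2 : om * (- (5 * (a * m))) <= om * (psiE eta K x j - psiE eta K y j - (eta (x j) - eta (y j)))) by (apply Rmult_le_compat_l; lra).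
  assert (F2' : om * (psiE eta K x j - psiE eta K y j - (eta (x j) - eta (y j))) <= om * (5 * (a * m))) by (apply Rmult_le_compat_l; lra).
  assert (F3 : (x j - y j) * (1 - om * p) <= m * (1 - om * p)) by (apply Rmult_le_compat_r; nra).
  assert (F4 : -m * (1 - om * p) <= (x j - y j) * (1 - om * p)) by (apply Rmult_le_compat_r; nra).
  assert (F5 : om * lo * m <= om * p * m) by (apply Rmult_le_compat_r; [lra|]; apply Rmult_le_compat_l; lra).
  split; nra.
Qed.

Fixpoint Xs (k : nat) : Z -> R := match k with O => rn | S k => Tm (Xs k) end.

Lemma Xs_box k : box N rL rU (Xs k).
Proof.
  induction k; simpl; auto. intros j Hj. pose proof (T_box (Xs k) j IHk Hj). lra.
Qed.

Definition qq := 1 - om * (lo - 5 * a).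

Lemma qq_bnd : 0 <= qq < 1.
Proof.
  pose proof om_pos. pose proof om_eq. unfold qq. split.
  - assert (om * (lo - 5 * a) <= om * (hi + 5 * a)) by (apply Rmult_le_compat_l; lra). lra.
  - assert (0 < om * (lo - 5 * a)) by (apply Rmult_lt_0_compat; lra). lra.
Qed.

Lemma Xs_step k i : in_range N i -> Rabs (Xs (S k) i - Xs k i) <= qq ^ k * (rU - rL).
Proof.
  revert i. induction k; intros i Hi.
  - simpl. pose proof (T_box rn i Brn Hi). pose proof (Brn i Hi).
    apply Rabs_le_between. lra.
  - change (Xs (S (S k)) i) with (Tm (Xs (S k)) i). change (Xs (S k) i) with (Tm (Xs k) i).
    eapply Rle_trans. apply T_contr; [apply Xs_box | apply Xs_box | exact IHk | exact Hi].
    fold qq. simpl. lra.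
Qed.

Definition BB k := qq ^ k * (rU - rL) / (1 - qq).

Lemma Xs_tail k n i : in_range N i -> Rabs (Xs (k + n) i - Xs k i) <= BB k - BB (k + n).
Proof.
  intros Hi. pose proof qq_bnd. induction n.
  - rewrite Nat.add_0_r, Rminus_eq_0, Rabs_R0. lra.
  - replace (Xs (k + S n) i - Xs k i) with ((Xs (S (k + n)) i - Xs (k + n) i) + (Xs (k + n) i - Xs k i))
      by (rewrite Nat.add_succ_r; ring).
    eapply Rle_trans. apply Rabs_triang.
    pose proof (Xs_step (k + n) i Hi).
    assert (BB (k + n) - BB (k + S n) = qq ^ (k + n) * (rU - rL)).
    { unfold BB. rewrite Nat.add_succ_r. simpl. field. lra. }
    lra.
Qed.

Lemma BB_pos k : 0 <= BB k.
Proof.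
  pose proof qq_bnd. unfold BB. apply Rmult_le_pos; [apply Rmult_le_pos|].
  apply pow_le; lra. lra. left; apply Rinv_0_lt_compat; lra.
Qed.

Lemma Xs_tail' k n i : (k <= n)%nat -> in_range N i -> Rabs (Xs n i - Xs k i) <= BB k.
Proof.
  intros Hkn Hi. replace n with (k + (n - k))%nat by lia.
  pose proof (Xs_tail k (n - k) i Hi). pose proof (BB_pos (k + (n - k))). lra.
Qed.

Lemma BB_small eps : 0 < eps -> exists k, BB k < eps.
Proof.
  intros He. pose proof qq_bnd.
  destruct (pow_lt_1_zero qq ltac:(rewrite Rabs_pos_eq; lra) (eps * (1 - qq) / (rU - rL))) as [k Hk].
  { apply Rdiv_lt_0_compat; [apply Rmult_lt_0_compat|]; lra. }
  exists k. specialize (Hk k (le_n k)). rewrite Rabs_pos_eq in Hk by (apply pow_le; lra).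
  unfold BB. apply Rmult_lt_reg_r with (1 - qq). lra.
  unfold Rdiv. rewrite Rmult_assoc, Rinv_l, Rmult_1_r by lra.
  apply Rmult_lt_reg_r with (/ (rU - rL)). apply Rinv_0_lt_compat; lra.
  rewrite Rmult_assoc, Rinv_r, Rmult_1_r by lra. exact Hk.
Qed.

Lemma Xs_cauchy i : in_range N i -> Cauchy_crit (fun k => Xs k i).
Proof.
  intros Hi eps He. destruct (BB_small (eps / 2)) as [k Hk]. lra.
  exists k. intros n m Hn Hm. unfold Rdist.
  pose proof (Xs_tail' k n i Hn Hi). pose proof (Xs_tail' k m i Hm Hi).
  replace (Xs n i - Xs m i) with ((Xs n i - Xs k i) - (Xs m i - Xs k i)) by ring.
  eapply Rle_lt_trans. apply Rabs_triang. rewrite Rabs_Ropp. lra.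
Qed.

Lemma fixpt : exists xs, in_Omega N rL rU xs /\ forall j, in_range N j -> psiE eta K xs j + psiG eta K rn j = Phi j.
Proof.
  assert (Hlim : forall j, {l | in_range N j -> Un_cv (fun k => Xs k j) l}).
  { intros j. destruct (Z_le_dec (-N) j) as [h1|h1]; [destruct (Z_le_dec j N) as [h2|h2]|].
    - assert (Hr : in_range N j) by (split; auto).
      destruct (Rcomplete.R_complete _ (Xs_cauchy j Hr)) as [l Hl]. exists l. auto.
    - exists 0. intros H; unfold in_range in H; lia.
    - exists 0. intros H; unfold in_range in H; lia. }
  set (xs := fun j => proj1_sig (Hlim j)).
  assert (Hcv : forall j, in_range N j -> Un_cv (fun k => Xs k j) (xs j)).
  { intros j Hj. unfold xs. destruct (Hlim j) as [l Hl]. simpl. auto. }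
  assert (Hd : forall k j, in_range N j -> Rabs (Xs k j - xs j) <= BB k).
  { intros k j Hj. apply Rle_plus_epsilon. intros eps He.
    destruct (Hcv j Hj eps He) as [M HM]. specialize (HM (k + M)%nat ltac:(lia)).
    unfold Rdist in HM. pose proof (Xs_tail' k (k + M) j ltac:(lia) Hj).
    replace (Xs k j - xs j) with (- (Xs (k + M) j - Xs k j) + (Xs (k + M) j - xs j)) by ring.
    eapply Rle_trans. apply Rabs_triang. rewrite Rabs_Ropp. lra. }
  assert (Bxs : box N rL rU xs).
  { intros j Hj. split; apply Rle_plus_epsilon; intros eps He;
    destruct (Hcv j Hj eps He) as [M HM]; specialize (HM M (le_n M));
    unfold Rdist in HM; apply Rabs_lt_between in HM; pose proof (Xs_box M j Hj); lra. }
  assert (Hfix : forall j, in_range N j -> Tm xs j = xs j).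
  { intros j Hj. apply Rminus_diag_uniq. apply Rabs_eq_0.
    apply Rle_antisym; [|apply Rabs_pos].
    apply Rle_plus_epsilon. intros eps He.
    destruct (BB_small (eps / 2)) as [k Hk]. lra.
    replace (Tm xs j - xs j) with ((Tm xs j - Tm (Xs k) j) + (Xs (S k) j - xs j)) by (simpl; ring).
    eapply Rle_trans. apply Rabs_triang.
    pose proof (T_contr xs (Xs k) (BB k) j Bxs (Xs_box k) (fun i Hi => ltac:(rewrite Rabs_minus_sym; apply Hd; auto)) Hj).
    pose proof (Hd (S k) j Hj). pose proof qq_bnd. fold qq in H.
    assert (BB (S k) <= BB k).
    { unfold BB. simpl. unfold Rdiv. rewrite !Rmult_assoc. pattern (qq ^ k * ((rU - rL) * / (1 - qq))) at 2.
      rewrite <- Rmult_1_l. apply Rmult_le_compat_r; [|lra].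
      apply Rmult_le_pos. apply pow_le; lra. apply Rmult_le_pos. lra. left; apply Rinv_0_lt_compat; lra. }
    pose proof (BB_pos k).
    assert (qq * BB k <= BB k) by nra. lra. }
  exists xs. split.
  - intros j Hj. rewrite <- (Hfix j Hj). apply T_box; auto.
  - intros j Hj. pose proof (Hfix j Hj). unfold Tm in H. pose proof om_pos.
    assert (HH : om * (psiE eta K xs j + psiG eta K rn j - Phi j) = 0) by lra.
    apply Rmult_integral in HH. destruct HH; lra.
Qed.
End S3.

Lemma fold_ge (f : nat -> R) l k : In k l -> f k <= fold_right Rmax 0 (map f l).
Proof.
  induction l as [|h t IH]; simpl; [tauto|].
  intros [->|H]. apply Rmax_l. eapply Rle_trans. apply IH; auto. apply Rmax_r.
Qed.

Lemma fold_le (f : nat -> R) l B : 0 <= B -> (forall k, In k l -> f k <= B) ->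
  fold_right Rmax 0 (map f l) <= B.
Proof.
  intros HB. induction l as [|h t IH]; simpl; intros H; auto.
  apply Rmax_lub; auto.
Qed.

Lemma sup_ge N v j : in_range N j -> Rabs (v j) <= supnorm N v.
Proof.
  intros Hj. unfold supnorm.
  replace (v j) with (v (Z.of_nat (Z.to_nat (j + N)) - N)%Z) by (f_equal; unfold in_range in *; lia).
  apply (fold_ge (fun k : nat => Rabs (v (Z.of_nat k - N)%Z))).
  apply in_seq. unfold in_range in *; lia.
Qed.

Lemma sup_le N v B : 0 <= B -> (forall j, in_range N j -> Rabs (v j) <= B) -> supnorm N v <= B.
Proof.
  intros HB H. unfold supnorm. apply fold_le; auto.
  intros k Hk. apply in_seq in Hk. apply H. unfold in_range; lia.
Qed.

Lemma omega_box N rL rU x : in_Omega N rL rU x -> box N rL rU x.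
Proof. intros H k Hk. specialize (H k Hk). lra. Qed.

Section S4.
Variable eta : R -> R.
Variables (N K : Z) (rL rU a lo hi : R) (Phi : Z -> R).
Hypothesis HK : (2 <= K)%Z.
Hypothesis HKN : (K < N - 1)%Z.
Hypothesis Ha : 0 <= a.
Hypothesis Hlo : 5 * a < lo.
Hypothesis Lip : forall u v, 2 * rL <= u -> 2 * rL <= v -> Rabs (eta u - eta v) <= a * Rabs (u - v).
Hypothesis H0 : forall u v, rL <= u <= rU -> rL <= v <= rU ->
  exists p, lo <= p <= hi /\ eta u - eta v = p * (u - v).

Lemma contr rn rn1 sn sn1 : box N rL rU rn -> box N rL rU rn1 -> gfi_step eta N K Phi rn rn1 ->
  box N rL rU sn -> box N rL rU sn1 -> gfi_step eta N K Phi sn sn1 ->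
  supnorm N (fun j => rn1 j - sn1 j) * (lo - 5 * a) <= 8 * a * supnorm N (fun j => rn j - sn j).
Proof.
  intros B1 B2 G1 B3 B4 G2.
  set (m := supnorm N (fun j => rn1 j - sn1 j)).
  set (M := supnorm N (fun j => rn j - sn j)).
  assert (Dm : forall k, in_range N k -> Rabs (rn1 k - sn1 k) <= m)
    by (intros k Hk; apply (sup_ge N (fun j => rn1 j - sn1 j)); auto).
  assert (DM : forall k, in_range N k -> Rabs (rn k - sn k) <= M)
    by (intros k Hk; apply (sup_ge N (fun j => rn j - sn j)); auto).
  assert (Hr0 : in_range N 0) by (unfold in_range; lia).
  assert (Hm0 : 0 <= m) by (pose proof (Dm 0%Z Hr0); pose proof (Rabs_pos (rn1 0%Z - sn1 0%Z)); lra).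
  assert (HM0 : 0 <= M) by (pose proof (DM 0%Z Hr0); pose proof (Rabs_pos (rn 0%Z - sn 0%Z)); lra).
  assert (Hb : m <= (5 * a * m + 8 * a * M) / lo).
  { apply sup_le. apply Rdiv_le_0_compat; [|lra]. assert (0 <= a * m) by (apply Rmult_le_pos; lra).
    assert (0 <= a * M) by (apply Rmult_le_pos; lra). lra.
    intros j Hj.
    pose proof (lipE eta N K rL rU a m HK HKN Ha Lip rn1 sn1 j B2 B4 Dm Hj) as L1.
    pose proof (lipG eta N K rL rU a M HK HKN Ha Lip rn sn j B1 B3 DM Hj) as L2.
    pose proof (G1 j Hj). pose proof (G2 j Hj).
    destruct (H0 (rn1 j) (sn1 j)) as [p [Hp E]]; [apply B2; auto | apply B4; auto |].
    apply Rabs_le_between in L1. apply Rabs_le_between in L2.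
    apply Rmult_le_reg_r with lo. lra. unfold Rdiv. rewrite Rmult_assoc, Rinv_l, Rmult_1_r by lra.
    assert (Hpd : Rabs (p * (rn1 j - sn1 j)) <= 5 * a * m + 8 * a * M).
    { apply Rabs_le_between. lra. }
    rewrite Rabs_mult, Rabs_pos_eq in Hpd by lra.
    assert (lo * Rabs (rn1 j - sn1 j) <= p * Rabs (rn1 j - sn1 j)) by (apply Rmult_le_compat_r; [apply Rabs_pos|lra]).
    lra. }
  apply Rmult_le_compat_r with (r := lo) in Hb; [|lra].
  unfold Rdiv in Hb. rewrite Rmult_assoc, Rinv_l, Rmult_1_r in Hb by lra. lra.
Qed.
End S4.

Theorem theorem5p1
  (phi eta eta1 eta2 eta3 : R -> R)
  (a0 rt1 rt2 a1 : R) (N K : Z) (rL rU : R) (Phi : Z -> R) :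
  C3_chain phi eta eta1 eta2 eta3 ->
  0 < a0 -> a0 < rt1 -> rt1 < rt2 -> rt2 < 2 * a0 -> a0 < a1 ->
  (forall r, 0 < r < rt1 -> eta1 r > 0) ->
  (forall r, r > rt1 -> eta1 r < 0) ->
  (forall r, 0 < r < rt2 -> eta2 r < 0) ->
  (forall r, r > rt2 -> eta2 r > 0) ->
  (forall r, 0 < r < a0 -> eta_hat eta r < 0) ->
  (forall r, r > a0 -> eta_hat eta r > 0) ->
  (* hat eta'(r) = eta'(r) + 4 eta'(2r) *)
  (forall r, 0 < r < a1 -> eta1 r + 4 * eta1 (2 * r) > 0) ->
  (forall r, r > a1 -> eta1 r + 4 * eta1 (2 * r) < 0) ->
  (2 <= K)%Z -> (K < N - 1)%Z ->
  rt2 / 2 < rL -> rL < rU ->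
  eta1 rU + 13 * eta1 (2 * rL) > 0 ->
  (forall j, in_range N j ->
     eta rL + 4 * eta (2 * rL) - 2 * eta (2 * rU) < Phi j /\
     Phi j < eta rU + 4 * eta (2 * rU) - 2 * eta (2 * rL)) ->
  (forall rn, in_Omega N rL rU rn ->
     exists rn1, in_Omega N rL rU rn1 /\ gfi_step eta N K Phi rn rn1 /\
       forall s, in_Omega N rL rU s -> gfi_step eta N K Phi rn s ->
         forall j, in_range N j -> s j = rn1 j) /\
  (forall rn rn1 sn sn1,
     in_Omega N rL rU rn -> in_Omega N rL rU rn1 -> gfi_step eta N K Phi rn rn1 ->
     in_Omega N rL rU sn -> in_Omega N rL rU sn1 -> gfi_step eta N K Phi sn sn1 ->
     supnorm N (fun j => rn1 j - sn1 j) <=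
       8 * Rabs (eta1 (2 * rL)) / (eta1 rU - 5 * Rabs (eta1 (2 * rL)))
         * supnorm N (fun j => rn j - sn j)) /\
  8 * Rabs (eta1 (2 * rL)) / (eta1 rU - 5 * Rabs (eta1 (2 * rL))) < 1.
Proof.
  intros [_ [D0 [D1 _]]] Ha0 Hr1 Hr12 Hr2 Ha1 E1p E1n E2n E2p _ _ _ _ HK HKN HrL HLU H13 HPhi.
  assert (Hn2 : eta1 (2 * rL) < 0) by (apply E1n; lra).
  set (a := Rabs (eta1 (2 * rL))).
  assert (Ea : a = - eta1 (2 * rL)) by (unfold a; rewrite Rabs_left; lra).
  assert (Ha : 0 <= a) by lra.
  assert (Hlo : 13 * a < eta1 rU) by lra.
  assert (HU : rU <= rt1).
  { destruct (Rle_or_lt rU rt1) as [h|h]; auto. specialize (E1n rU h). lra. }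
  assert (HrL0 : 0 < rL) by lra.
  assert (Hhi : eta1 rU <= eta1 rL) by (apply (d_dec eta1 eta2 rt2 rL rU D1 E2n); lra).
  assert (H0 : forall u v, rL <= u <= rU -> rL <= v <= rU ->
    exists p, eta1 rU <= p <= eta1 rL /\ eta u - eta v = p * (u - v)).
  { intros u v Hu Hv. destruct (mvt_pos eta eta1 v u) as [c [Hc Ec]].
    - apply Rmin_glb_lt; lra.
    - auto.
    - assert (rL <= c <= rU).
      { split. eapply Rle_trans; [|apply Hc]. apply Rmin_glb; lra.
        eapply Rle_trans; [apply Hc|]. apply Rmax_lub; lra. }
      exists (eta1 c). split; [split|lra].
      + apply (d_dec eta1 eta2 rt2); auto; lra.
      + apply (d_dec eta1 eta2 rt2); auto; lra. }
  assert (Hd2 : forall c, 2 * rL <= c -> - a <= eta1 c < 0).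
  { intros c Hc. split.
    - rewrite Ea. pose proof (d_inc eta1 eta2 rt2 (2 * rL) c D1 E2p ltac:(lra) ltac:(lra)). lra.
    - apply E1n; lra. }
  assert (Lip : forall u v, 2 * rL <= u -> 2 * rL <= v -> Rabs (eta u - eta v) <= a * Rabs (u - v)).
  { intros u v Hu Hv. destruct (mvt_pos eta eta1 v u) as [c [Hc Ec]].
    - apply Rmin_glb_lt; lra.
    - auto.
    - assert (2 * rL <= c) by (eapply Rle_trans; [|apply Hc]; apply Rmin_glb; lra).
      rewrite Ec, Rabs_mult. apply Rmult_le_compat_r. apply Rabs_pos.
      destruct (Hd2 c H). rewrite Rabs_left; lra. }
  assert (Mono : forall u v, 2 * rL <= u <= v -> eta v <= eta u).
  { intros u v Huv. destruct (mvt_pos eta eta1 u v) as [c [Hc Ec]].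
    - apply Rmin_glb_lt; lra.
    - auto.
    - assert (2 * rL <= c) by (eapply Rle_trans; [|apply Hc]; apply Rmin_glb; lra).
      destruct (Hd2 c H). nra. }
  assert (Hlo5 : 5 * a < eta1 rU) by lra.
  assert (Part2 : forall rn rn1 sn sn1,
     in_Omega N rL rU rn -> in_Omega N rL rU rn1 -> gfi_step eta N K Phi rn rn1 ->
     in_Omega N rL rU sn -> in_Omega N rL rU sn1 -> gfi_step eta N K Phi sn sn1 ->
     supnorm N (fun j => rn1 j - sn1 j) <=
       8 * a / (eta1 rU - 5 * a) * supnorm N (fun j => rn j - sn j)).
  { intros rn rn1 sn sn1 B1 B2 G1 B3 B4 G2.
    pose proof (contr eta N K rL rU a (eta1 rU) (eta1 rL) Phi HK HKN Ha Hlo5 Lip H0 rn rn1 sn sn1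
      (omega_box _ _ _ _ B1) (omega_box _ _ _ _ B2) G1 (omega_box _ _ _ _ B3) (omega_box _ _ _ _ B4) G2) as C.
    apply Rmult_le_reg_r with (eta1 rU - 5 * a). lra.
    replace (8 * a / (eta1 rU - 5 * a) * supnorm N (fun j : Z => rn j - sn j) * (eta1 rU - 5 * a))
      with (8 * a * supnorm N (fun j : Z => rn j - sn j)) by (field; lra). exact C. }
  split; [|split].
  - intros rn Hrn.
    destruct (fixpt eta N K rL rU a (eta1 rU) (eta1 rL) Phi rn HK HKN HLU Ha Hlo Hhi Lip Mono H0 HPhi
      (omega_box _ _ _ _ Hrn)) as [xs [Hxs Gxs]].
    exists xs. split; [auto|split; [exact Gxs|]].
    intros s Hs Gs j Hj.
    pose proof (Part2 rn s rn xs Hrn Hs Gs Hrn Hxs Gxs) as C.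
    assert (Z0 : supnorm N (fun j => rn j - rn j) <= 0).
    { apply sup_le. lra. intros i _. rewrite Rminus_eq_0, Rabs_R0. lra. }
    assert (Z1 : 0 <= 8 * a / (eta1 rU - 5 * a)) by (apply Rdiv_le_0_compat; lra).
    assert (Z2 : 8 * a / (eta1 rU - 5 * a) * supnorm N (fun j => rn j - rn j) <= 0).
    { pose proof (Rmult_le_compat_l _ _ _ Z1 Z0) as Z3. rewrite Rmult_0_r in Z3. exact Z3. }
    pose proof (sup_ge N (fun j => s j - xs j) j Hj) as Z4. cbv beta in Z4.
    pose proof (Rabs_pos (s j - xs j)) as Z5.
    assert (Z6 : Rabs (s j - xs j) = 0) by lra. apply Rabs_eq_0 in Z6. lra.
  - exact Part2.
  - apply Rmult_lt_reg_r with (eta1 rU - 5 * a). lra.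
    unfold Rdiv. rewrite Rmult_assoc, Rinv_l, Rmult_1_r by lra. lra.
Qed.
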